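(* Let $r\in\mathbb Z_+$ be even, $\Gamma=\Gamma_{(r,r)}$, and $E\in\mathcal C_\Gamma\setminus\{-4,0,4\}$ with $E<0$. Let $\ell\ge1$ be maximal with $\lambda_\ell^\Gamma(0,0)<E$, and let $m\ge0$ be maximal with $\lambda_m^\Gamma(\pi,\pi)<E$ (with the convention $\lambda_0^\Gamma(\pi,\pi)=-\infty$). Then there exist $(\theta_1,\varphi_1),(\theta_2,\varphi_2)\in[0,\pi]^2$ and integers $n_1,n_2\ge0$ such that $\lambda^\Gamma_{\ell+2n_1}(\theta_1,\varphi_1)<E<\lambda^\Gamma_{\ell+2n_1+1}(\theta_1,\varphi_1)$ and $\lambda^\Gamma_{m+2n_2}(\theta_2,\varphi_2)<E<\lambda^\Gamma_{m+2n_2+1}(\theta_2,\varphi_2)$.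
   Context: For $r\ge3$ and $\theta\in\mathbb R$, $\Delta_\theta^r\in\mathbb C^{r\times r}$ is the Hermitian matrix with $1$ on the sub- and superdiagonals, $0$ on the diagonal, entry $e^{-i\theta}$ in position $(1,r)$ and $e^{i\theta}$ in position $(r,1)$, all other entries $0$; $\Delta_\theta^2=\begin{bmatrix}0&1+e^{-i\theta}\\1+e^{i\theta}&0\end{bmatrix}$. $\Gamma=\Gamma_{(r,r)}$, $\Delta^\Gamma_{\theta,\varphi}=\Delta_\theta^r\otimes I_r+I_r\otimes\Delta_\varphi^r$, with eigenvalues $\lambda_1^\Gamma(\theta,\varphi)\le\cdots\le\lambda_{r^2}^\Gamma(\theta,\varphi)$ counted with multiplicity (and $\lambda_0^\Gamma:=-\infty$). $\mathcal C_r=\{2\cos(\pi j/r): j\in\mathbb Z,\ 0\le j\le r\}$ and $\mathcal C_\Gamma=\{a+b:a,b\in\mathcal C_r\}$. *)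

(* Defs.v *)
From HB Require Import structures.
From Stdlib Require Import Reals Lra ClassicalEpsilon FunctionalExtensionality.
From mathcomp Require Import all_boot all_order all_algebra.
Set Implicit Arguments. Unset Strict Implicit. Unset Printing Implicit Defensive.

Definition Reqb (x y : R) : bool := if Req_EM_T x y then true else false.
Lemma ReqbP : Equality.axiom Reqb.
Proof. by move=> x y; rewrite /Reqb; case: Req_EM_T => h; constructor. Qed.
HB.instance Definition _ := hasDecEq.Build R ReqbP.

Definition Rfind (P : pred R) (n : nat) : option R :=
  match excluded_middle_informative (exists x, P x) with
  | left H => Some (proj1_sig (constructive_indefinite_description _ H))
  | right _ => None
  end.
Lemma Rfind_correct P n x : Rfind P n = Some x -> P x.
Proof.
rewrite /Rfind; case: excluded_middle_informative => // H [<-].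
exact: proj2_sig (constructive_indefinite_description _ H).
Qed.
Lemma Rfind_complete (P : pred R) : (exists x, P x) -> exists n, Rfind P n.
Proof. by move=> H; exists 0%N; rewrite /Rfind; case: excluded_middle_informative. Qed.
Lemma Rfind_ext (P Q : pred R) : P =1 Q -> Rfind P =1 Rfind Q.
Proof. by move=> /functional_extensionality ->. Qed.
HB.instance Definition _ :=
  hasChoice.Build R Rfind_correct Rfind_complete Rfind_ext.

Definition C := (R * R)%type.
HB.instance Definition _ := Choice.on C.

Definition C0 : C := (R0, R0).
Definition C1 : C := (R1, R0).
Definition Cadd (a b : C) : C := (Rplus a.1 b.1, Rplus a.2 b.2).
Definition Copp (a : C) : C := (Ropp a.1, Ropp a.2).
Definition Cmul (a b : C) : C :=
  (Rminus (Rmult a.1 b.1) (Rmult a.2 b.2), Rplus (Rmult a.1 b.2) (Rmult a.2 b.1)).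

Lemma CaddA : associative Cadd.
Proof. by case=> ? ?; case=> ? ?; case=> ? ?; rewrite /Cmul /Cadd /C0 /C1 /Copp /=; f_equal; ring. Qed.
Lemma CaddC : commutative Cadd.
Proof. by case=> ? ?; case=> ? ?; rewrite /Cmul /Cadd /C0 /C1 /Copp /=; f_equal; ring. Qed.
Lemma Cadd0 : left_id C0 Cadd.
Proof. by case=> ? ?; rewrite /Cmul /Cadd /C0 /C1 /Copp /=; f_equal; ring. Qed.
Lemma CaddN : left_inverse C0 Copp Cadd.
Proof. by case=> ? ?; rewrite /Cmul /Cadd /C0 /C1 /Copp /=; f_equal; ring. Qed.
HB.instance Definition _ := GRing.isZmodule.Build C CaddA CaddC Cadd0 CaddN.

Lemma CmulA : associative Cmul.
Proof. by case=> ? ?; case=> ? ?; case=> ? ?; rewrite /Cmul /Cadd /C0 /C1 /Copp /=; f_equal; ring. Qed.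
Lemma CmulC : commutative Cmul.
Proof. by case=> ? ?; case=> ? ?; rewrite /Cmul /Cadd /C0 /C1 /Copp /=; f_equal; ring. Qed.
Lemma Cmul1 : left_id C1 Cmul.
Proof. by case=> ? ?; rewrite /Cmul /Cadd /C0 /C1 /Copp /=; f_equal; ring. Qed.
Lemma CmulDl : left_distributive Cmul Cadd.
Proof. by case=> ? ?; case=> ? ?; case=> ? ?; rewrite /Cmul /Cadd /C0 /C1 /Copp /=; f_equal; ring. Qed.
Lemma C1_neq0 : C1 != C0.
Proof.
apply/eqP => -[] H; move: H; exact: R1_neq_R0.
Qed.
HB.instance Definition _ :=
  GRing.Zmodule_isComNzRing.Build C CmulA CmulC Cmul1 CmulDl C1_neq0.

Local Open Scope ring_scope.
Definition Cr (x : R) : C := (x, R0).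
Definition expi (t : R) : C := (cos t, sin t).

(* For r >= 3 this is
   exactly the paper's definition; for r = 2 the contributions add up to the
   paper's [[0, 1+e^{-i theta}], [1+e^{i theta}, 0]]. *)
Definition deltaE (r : nat) (t : R) (i j : nat) : C :=
  ((j == i.+1)%:R + (i == j.+1)%:R
   + (if (i == 0%N) && (j == r.-1) then expi (Ropp t) else 0)
   + (if (i == r.-1) && (j == 0%N) then expi t else 0))%R.

Definition Delta (r : nat) (t : R) : 'M[C]_r := \matrix_(i < r, j < r) deltaE r t i j.

(* Delta^Gamma_{theta,phi} = Delta_theta (x) I_r + I_r (x) Delta_phi, with the
   standard Kronecker indexing (i,j) <-> i*r + j of 'I_(r*r). *)
Definition DeltaG (r : nat) (t p : R) : 'M[C]_(r * r) :=
  \matrix_(k < r * r, l < r * r)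
    (deltaE r t (k %/ r)%N (l %/ r)%N * ((k %% r)%N == (l %% r)%N)%:R
     + ((k %/ r)%N == (l %/ r)%N)%:R * deltaE r p (k %% r)%N (l %% r)%N)%R.

Definition Rleb (x y : R) : bool := if Rle_dec x y then true else false.

(* s is the nondecreasing list of the eigenvalues (with algebraic multiplicity,
   all real) of A: the characteristic polynomial det(x I - A) factors as
   prod_{y in s} (x - y). *)
Definition is_spectrum (n : nat) (A : 'M[C]_n) (s : seq R) : Prop :=
  size s = n /\ sorted Rleb s /\
  forall x : R, \det ((Cr x)%:M - A) = (\prod_(y <- s) (Cr x - Cr y))%R.

Definition eigs (n : nat) (A : 'M[C]_n) : seq R :=
  epsilon (inhabits [::]) (is_spectrum A).

(* lamG r t p k = lambda_k^Gamma(t,p) for 1 <= k <= r^2 (1-based index). *)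
Definition lamG (r : nat) (t p : R) (k : nat) : R :=
  nth R0 (eigs (DeltaG r t p)) k.-1.

(* Main.v *)
Require Import Defs.
From HB Require Import structures.
From Stdlib Require Import Reals Lra Lia ClassicalEpsilon.
From mathcomp Require Import all_boot all_order all_algebra.
From mathcomp Require Import zify.
Import Defs.
Set Implicit Arguments. Unset Strict Implicit. Unset Printing Implicit Defensive.

Module P1.
Import GRing.Theory.
Local Open Scope ring_scope.

Lemma CaddE (a b : C) : a + b = Cadd a b. Proof. reflexivity. Qed.
Lemma CmulE (a b : C) : a * b = Cmul a b. Proof. reflexivity. Qed.
Lemma CoppE (a : C) : - a = Copp a. Proof. reflexivity. Qed.
Lemma C0E : (0 : C) = C0. Proof. reflexivity. Qed.
Lemma C1E : (1 : C) = C1. Proof. reflexivity. Qed.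
Lemma CnatE (b : bool) : (b%:R : C) = if b then 1 else 0. Proof. by case: b. Qed.

Ltac Csimpl := rewrite ?CaddE ?CmulE ?CoppE ?C0E ?C1E /Cadd /Cmul /Copp /C0 /C1 /Cr /expi /=.

Lemma Cr_add (x y : R) : Cr (Rplus x y) = Cr x + Cr y.
Proof. Csimpl; f_equal; ring. Qed.
Lemma Cr_mul (x y : R) : Cr (Rmult x y) = Cr x * Cr y.
Proof. Csimpl; f_equal; ring. Qed.
Lemma Cr_opp (x : R) : Cr (Ropp x) = - Cr x.
Proof. Csimpl; f_equal; ring. Qed.
Lemma Cr_sub (x y : R) : Cr (Rminus x y) = Cr x - Cr y.
Proof. by rewrite /Rminus Cr_add Cr_opp. Qed.
Lemma Cr1 : Cr R1 = 1. Proof. by []. Qed.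
Lemma Cr0 : Cr R0 = 0. Proof. by []. Qed.
Lemma Cr_inj (x y : R) : Cr x = Cr y -> x = y.
Proof. by case. Qed.

Lemma Cr_prod (s : seq R) (f : R -> R) :
  \prod_(y <- s) Cr (f y) = Cr (foldr (fun y acc => Rmult (f y) acc) R1 s).
Proof.
elim: s => [|y s IH]; first by rewrite big_nil.
by rewrite big_cons IH /= Cr_mul.
Qed.

Lemma expi_add (x y : R) : expi x * expi y = expi (Rplus x y).
Proof. Csimpl; rewrite cos_plus sin_plus; f_equal; ring. Qed.
Lemma expi0 : expi R0 = 1.
Proof. Csimpl; rewrite cos_0 sin_0; f_equal. Qed.
Lemma expi_period (x : R) (k : nat) : expi (Rplus x (Rmult (Rmult 2 (INR k)) PI)) = expi x.
Proof. by rewrite /expi cos_period sin_period. Qed.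
Lemma expi_cos (x a : R) :
  expi (Rplus x a) + expi (Rminus x a) = Cr (Rmult 2 (cos a)) * expi x.
Proof.
Csimpl. rewrite /Rminus cos_plus sin_plus cos_plus sin_plus cos_neg sin_neg.
f_equal; ring.
Qed.

Lemma sum_ind (n c : nat) (v : nat -> C) :
  \sum_(b < n) ((nat_of_ord b == c)%:R * v b) = if (c < n)%N then v c else 0.
Proof.
elim: n => [|n IH]; first by rewrite big_ord0.
rewrite big_ord_recr /= IH.
case: (ltngtP c n) => H.
- by rewrite (ltn_trans H (ltnSn n)) mul0r addr0.
- by rewrite ltnNge H mul0r addr0.
- by rewrite H ltnSn mul1r add0r.
Qed.

Lemma sum_ind_if (n c : nat) (P : bool) (w : C) (v : nat -> C) :
  \sum_(b < n) ((if P && (nat_of_ord b == c) then w else 0) * v b)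
  = if P && (c < n)%N then w * v c else 0.
Proof.
case: P => /=; last by rewrite big1 // => b _; rewrite mul0r.
transitivity (w * \sum_(b < n) ((nat_of_ord b == c)%:R * v b)).
  rewrite mulr_sumr; apply: eq_bigr => b _; case: eqP => _ /=.
  by rewrite mul1r. by rewrite !mul0r mulr0.
by rewrite sum_ind; case: ifP => _; rewrite ?mulr0.
Qed.

End P1.
Import P1.

Module P2.
Import GRing.Theory.
Local Open Scope ring_scope.

Lemma expi_negK (t : R) : expi (Ropp t) * expi t = 1.
Proof. by rewrite expi_add Rplus_opp_l expi0. Qed.

Lemma sum_ind2 (n a : nat) (v : nat -> C) :
  \sum_(b < n) ((a == (nat_of_ord b).+1)%:R * v b)
  = if (0 < a)%N && (a.-1 < n)%N then v a.-1 else 0.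
Proof.
transitivity (\sum_(b < n) ((if (0 < a)%N && (nat_of_ord b == a.-1) then 1 else 0) * v b)).
  apply: eq_bigr => b _; congr (_ * _).
  case: a => [|a] /=; first by [].
  by rewrite eqSS eq_sym; case: eqP.
by rewrite sum_ind_if mul1r.
Qed.

Lemma deltaE_sum (r a : nat) (t : R) (v : nat -> C) :
  \sum_(b < r) (deltaE r t a b * v b) =
    (if (a.+1 < r)%N then v a.+1 else 0)
  + (if (0 < a)%N && (a.-1 < r)%N then v a.-1 else 0)
  + (if (a == 0%N) && (r.-1 < r)%N then expi (Ropp t) * v r.-1 else 0)
  + (if (a == r.-1) && (0 < r)%N then expi t * v 0%N else 0).
Proof.
rewrite /deltaE.
under eq_bigr do rewrite !mulrDl.
rewrite !big_split /= sum_ind sum_ind2 sum_ind_if sum_ind_if.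
by [].
Qed.

Lemma INR_pred (a : nat) : (0 < a)%N -> INR a.-1 = Rminus (INR a) 1.
Proof. by case: a => // a _; rewrite S_INR /=; lra. Qed.

Lemma eig1 (r : nat) (t x : R) (a : nat) :
  (1 < r)%N -> (a < r)%N -> expi (Rmult (INR r) x) = expi t ->
  \sum_(b < r) (deltaE r t a b * expi (Rmult (INR b) x))
  = Cr (Rmult 2 (cos x)) * expi (Rmult (INR a) x).
Proof.
move=> Hr Ha Ht.
rewrite (deltaE_sum r a t (fun b => expi (Rmult (INR b) x))); cbv beta.
have H0r : (0 < r)%N by apply: ltn_trans Hr.
have Hr1 : (r.-1 < r)%N by rewrite prednK ?ltnSn // ltnW.
have Hr0 : (0 < r.-1)%N by rewrite -ltnS prednK // ltnW.
rewrite Hr1 (ltnW Hr) !andbT.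
have [->|Ha0] := eqVneq a 0%N.
- rewrite Hr ltnn /= eq_sym (gtn_eqF Hr0) addr0 addr0.
  have -> : expi (Ropp t) * expi (Rmult (INR r.-1) x) = expi (Ropp x).
    have -> : Rmult (INR r.-1) x = Rplus (Rmult (INR r) x) (Ropp x).
      rewrite INR_pred ?(ltn_trans _ Hr) //; ring.
    by rewrite -expi_add Ht mulrA expi_negK mul1r.
  have -> : Rmult (INR 0) x = R0 by simpl; ring.
  rewrite expi0 mulr1 -[X in expi X + _](Rplus_0_l) -[X in _ + expi X](Rplus_0_l).
  by rewrite -[Cr _]mulr1 -expi0 -expi_cos; congr (expi _ + expi _); ring.
have Ha0' : (0 < a)%N by rewrite lt0n.
rewrite Ha0' (leq_ltn_trans (leq_pred a) Ha) andTb addr0.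
have [Har|Har] := eqVneq a r.-1.
- rewrite Har (prednK H0r) ltnn add0r.
  rewrite (_ : INR 0%N = R0) // Rmult_0_l expi0 mulr1.
  rewrite -Ht addrC.
  have -> : Rmult (INR r) x = Rplus (Rmult (INR r.-1) x) x.
    rewrite INR_pred ?(ltn_trans _ Hr) //; ring.
  rewrite -expi_cos; congr (expi _ + expi _).
  rewrite -subn2 minus_INR ?INR_pred ?(ltn_trans _ Hr) //=; try ring.
  by apply/leP.
have Ha1 : (a.+1 < r)%N.
  by rewrite ltn_neqAle Ha andbT; apply: contra Har => /eqP <-.
rewrite Ha1 addr0 -expi_cos; congr (expi _ + expi _).
  by rewrite S_INR; ring.
by rewrite INR_pred //; ring.
Qed.

End P2.
Import P2.

Module P3.
Import GRing.Theory.
Local Open Scope ring_scope.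

Lemma big_pair (T : Type) (idx : T) (op : Monoid.law idx) (r : nat) (F : nat -> T) :
  \big[op/idx]_(K < r * r) F K = \big[op/idx]_(a < r) \big[op/idx]_(b < r) F (a * r + b)%N.
Proof.
rewrite -(big_mkord xpredT F).
suff H : forall n, \big[op/idx]_(0 <= K < n * r) F K
   = \big[op/idx]_(a < n) \big[op/idx]_(b < r) F (a * r + b)%N by apply: H.
elim => [|n IH]; first by rewrite mul0n big_geq // big_ord0.
rewrite big_ord_recr /= -IH mulSnr (@big_cat_nat _ _ _ (n * r)%N 0%N _ _ _ (leq0n _) (leq_addr _ _)) /=.
congr (op _ _).
rewrite -{1}[(n * r)%N]add0n big_addn addKn (big_mkord xpredT (fun i => F (i + n * r)%N)).
by apply: eq_bigr => b _; rewrite addnC.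
Qed.

Lemma divK (r a b : nat) : (b < r)%N -> ((a * r + b) %/ r)%N = a.
Proof. move=> Hb; rewrite divnMDl ?divn_small ?addn0 //; exact: leq_ltn_trans (leq0n _) Hb. Qed.
Lemma modK (r a b : nat) : (b < r)%N -> ((a * r + b) %% r)%N = b.
Proof. by move=> Hb; rewrite modnMDl modn_small. Qed.

End P3.
Import P3.

Module P4.
Import GRing.Theory.
Local Open Scope ring_scope.

Definition alpha (r : nat) (t : R) (j : nat) : R :=
  Rdiv (Rplus t (Rmult (Rmult 2 (INR j)) PI)) (INR r).
Definition mu (r : nat) (t : R) (j : nat) : R := Rmult 2 (cos (alpha r t j)).
Definition vv (r : nat) (t : R) (j a : nat) : C := expi (Rmult (INR a) (alpha r t j)).
Definition DG (r : nat) (t p : R) (k l : nat) : C :=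
    deltaE r t (k %/ r)%N (l %/ r)%N * ((k %% r)%N == (l %% r)%N)%:R
     + ((k %/ r)%N == (l %/ r)%N)%:R * deltaE r p (k %% r)%N (l %% r)%N.
Definition Pv (r : nat) (t p : R) (k l : nat) : C :=
  vv r t (l %/ r)%N (k %/ r)%N * vv r p (l %% r)%N (k %% r)%N.
Definition Pm (r : nat) (t p : R) : 'M[C]_(r * r) := \matrix_(k, l) Pv r t p k l.
Definition dd (r : nat) (t p : R) (L : nat) : R := Rplus (mu r t (L %/ r)%N) (mu r p (L %% r)%N).

Lemma alpha_expi (r : nat) (t : R) (j : nat) : (0 < r)%N ->
  expi (Rmult (INR r) (alpha r t j)) = expi t.
Proof.
move=> Hr; rewrite /alpha.
have Hr' : INR r <> R0 by apply: not_0_INR => H; rewrite H in Hr.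
rewrite (_ : Rmult (INR r) _ = Rplus t (Rmult (Rmult 2 (INR j)) PI)); last by field.
exact: expi_period.
Qed.

Lemma eig1' (r : nat) (t : R) (j a : nat) : (1 < r)%N -> (a < r)%N ->
  \sum_(b < r) (deltaE r t a b * vv r t j b) = Cr (mu r t j) * vv r t j a.
Proof.
move=> Hr Ha; apply: eig1 => //; apply: alpha_expi; exact: ltn_trans Hr.
Qed.

Lemma sum_ind' (n c : nat) (v : nat -> C) : (c < n)%N ->
  \sum_(b < n) ((c == nat_of_ord b)%:R * v b) = v c.
Proof.
move=> Hc.
rewrite (eq_bigr (fun b : 'I_n => ((nat_of_ord b == c)%:R * v b))) ?sum_ind ?Hc //.
by move=> b _; rewrite eq_sym.
Qed.

Lemma DeltaG_P (r : nat) (t p : R) : (1 < r)%N ->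
  DeltaG r t p *m Pm r t p = Pm r t p *m diag_mx (\row_L Cr (dd r t p L)).
Proof.
move=> Hr; have H0r : (0 < r)%N by apply: ltn_trans Hr.
apply/matrixP => K L; rewrite mul_mx_diag !mxE.
transitivity (\sum_(K' < r * r) DG r t p K K' * Pv r t p K' L).
  by apply: eq_bigr => K' _; rewrite !mxE.
rewrite (big_pair _ _ (fun n => DG r t p K n * Pv r t p n L)).
have HKa : (K %/ r < r)%N by rewrite ltn_divLR // ltn_ord.
have HKb : (K %% r < r)%N by rewrite ltn_mod.
transitivity (\sum_(a < r) \sum_(b < r)
   (deltaE r t (K %/ r) a * vv r t (L %/ r) a * (((K %% r)%N == b)%:R * vv r p (L %% r) b)
  + ((K %/ r)%N == a)%:R * vv r t (L %/ r) a * (deltaE r p (K %% r) b * vv r p (L %% r) b))).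
  apply: eq_bigr => a _; apply: eq_bigr => b _.
  rewrite /DG /Pv !divK ?modK ?ltn_ord //.
  by rewrite mulrDl; congr (_ + _); rewrite -!mulrA; congr (_ * _); rewrite mulrCA.
under eq_bigr do rewrite big_split /= -!mulr_sumr sum_ind' //.
rewrite big_split /=.
rewrite -(mulr_suml _ _ (fun i : 'I_r => deltaE r t (K %/ r) i * vv r t (L %/ r) i)) eig1' //.
rewrite -(mulr_suml _ _ (fun i : 'I_r => ((K %/ r)%N == i)%:R * vv r t (L %/ r) i)) sum_ind' //.
rewrite eig1' // /Pv /dd Cr_add.
rewrite mulrDr; congr (_ + _).
  by rewrite [RHS]mulrC mulrA.
by rewrite [RHS]mulrC [RHS]mulrCA.
Qed.

End P4.
Import P4.

Module P5.
Import GRing.Theory.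
Local Open Scope ring_scope.

Definition Cinv (z : C) : C :=
  (Rdiv z.1 (Rplus (Rmult z.1 z.1) (Rmult z.2 z.2)),
   Ropp (Rdiv z.2 (Rplus (Rmult z.1 z.1) (Rmult z.2 z.2)))).

Lemma Cinv_r (z : C) : z <> 0 -> z * Cinv z = 1.
Proof.
case: z => u v H.
have Hn : Rplus (Rmult u u) (Rmult v v) <> R0.
  move=> H0; apply: H.
  have Hu : u = R0 by nra.
  have Hv : v = R0 by nra.
  by rewrite Hu Hv.
rewrite CmulE C1E /Cmul /Cinv /C1 /=; f_equal; field; exact: Hn.
Qed.

Lemma C_cancel (S z : C) : z <> 0 -> S * z = 0 -> S = 0.
Proof.
move=> Hz HS; by rewrite -[S]mulr1 -(Cinv_r Hz) mulrA HS mul0r.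
Qed.

Lemma Cnat (n : nat) : (n%:R : C) = Cr (INR n).
Proof.
elim: n => [|n IH] //; by rewrite -addn1 natrD IH plus_INR Cr_add.
Qed.

Lemma expi_2pi (j : nat) : expi (Rmult (Rmult 2 (INR j)) PI) = 1.
Proof. by rewrite -[X in expi X]Rplus_0_l expi_period expi0. Qed.

Lemma cos_lt1 (y : R) : Rlt (Ropp PI) y -> Rlt y PI -> y <> R0 -> Rlt (cos (Rmult 2 y)) 1.
Proof.
move=> H1 H2 H3; rewrite cos_2a_sin.
have : sin y <> R0.
  move=> Hs; case: (Rlt_le_dec R0 y) => Hy.
    by move: (sin_gt_0 y Hy H2); rewrite Hs; lra.
  have Hy' : Rlt y R0 by lra.
  by move: (sin_lt_0_var y H1 Hy'); rewrite Hs; lra.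
move=> Hs; have : Rlt R0 (Rmult (sin y) (sin y)).
  by case: (Rlt_le_dec R0 (sin y)) => h; nra.
lra.
Qed.

Lemma geom_zero (n : nat) (x : R) :
  expi (Rmult (INR n) x) = 1 -> expi x <> 1 ->
  \sum_(a < n) expi (Rmult (INR a) x) = 0.
Proof.
move=> Hn Hx.
apply: (@C_cancel _ (expi x - 1)); first by move/subr0_eq.
rewrite mulrBr mulr1 mulr_suml.
have : \sum_(a < n) (expi (Rmult (INR a) x) * expi x) =
       \sum_(a < n.+1) expi (Rmult (INR a) x) - 1.
  rewrite big_ord_recl (_ : expi (Rmult (INR (@ord0 n)) x) = 1); last first.
    by rewrite (_ : Rmult (INR (@ord0 n)) x = R0) ?expi0 //= Rmult_0_l.
  rewrite [1 + _]addrC addrK; apply: eq_bigr => a _.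
  rewrite expi_add; congr expi.
  rewrite (_ : INR (lift ord0 a) = Rplus (INR a) 1); first by ring.
  rewrite -S_INR; reflexivity.
move->; by rewrite big_ord_recr /= Hn addrK subrr.
Qed.

Definition vc (r : nat) (t : R) (j a : nat) : C := expi (Ropp (Rmult (INR a) (alpha r t j))).

Lemma orth1 (r : nat) (t : R) (j j' : nat) : (0 < r)%N -> (j < r)%N -> (j' < r)%N ->
  \sum_(a < r) (vc r t j a * vv r t j' a) = if j == j' then Cr (INR r) else 0.
Proof.
move=> Hr Hj Hj'.
have HrR : INR r <> R0 by apply: not_0_INR => H; rewrite H in Hr.
have [<-|Hjj] := eqVneq j j'.
  under eq_bigr do rewrite /vc /vv expi_negK.
  by rewrite sumr_const card_ord Cnat.
set x := Rdiv (Rmult (Rmult 2 PI) (Rminus (INR j') (INR j))) (INR r).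
have Hterm : forall a : nat, vc r t j a * vv r t j' a = expi (Rmult (INR a) x).
  move=> a; rewrite /vc /vv expi_add; congr expi; rewrite /x /alpha; field; exact: HrR.
under eq_bigr do rewrite Hterm.
apply: geom_zero.
  rewrite /x (_ : Rmult (INR r) _ = Rplus (Rmult (Rmult 2 (INR j')) PI) (Ropp (Rmult (Rmult 2 (INR j)) PI))); last by field.
  by rewrite -expi_add expi_2pi mul1r -[expi (Ropp _)]mul1r -{1}(expi_2pi j) mulrC expi_negK.
case => Hc _; move: Hc; apply: Rlt_not_eq.
rewrite /x (_ : Rdiv _ _ = Rmult 2 (Rdiv (Rmult PI (Rminus (INR j') (INR j))) (INR r))); last by field.
have HrR' : Rlt R0 (INR r) by apply: lt_0_INR; apply/ltP.
have Hj1 : Rlt (INR j) (INR r) by apply: lt_INR; apply/ltP.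
have Hj2 : Rlt (INR j') (INR r) by apply: lt_INR; apply/ltP.
have Hj3 : Rle R0 (INR j) by apply: pos_INR.
have Hj4 : Rle R0 (INR j') by apply: pos_INR.
have Hneq : INR j' <> INR j by move/INR_eq => E; rewrite E eqxx in Hjj.
apply: cos_lt1.
- apply Rmult_lt_reg_r with (INR r) => //.
  rewrite /Rdiv Rmult_assoc Rinv_l //; have := PI_RGT_0; nra.
- apply Rmult_lt_reg_r with (INR r) => //.
  rewrite /Rdiv Rmult_assoc Rinv_l //; have := PI_RGT_0; nra.
- rewrite /Rdiv => H0.
  have : Rmult PI (Rminus (INR j') (INR j)) = R0.
    rewrite -(Rmult_1_r (Rmult _ _)) -(Rinv_l (INR r)) // -Rmult_assoc H0; ring.
  move=> /Rmult_integral [H1|H1]; first by have := PI_RGT_0; lra.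
  by apply: Hneq; lra.
Qed.

End P5.
Import P5.

Module P6.
Import GRing.Theory.
Local Open Scope ring_scope.

Definition Qm (r : nat) (t p : R) : 'M[C]_(r * r) :=
  \matrix_(L, K) (Cr (Rinv (Rmult (INR r) (INR r))) *
     (vc r t (L %/ r)%N (K %/ r)%N * vc r p (L %% r)%N (K %% r)%N)).

Lemma QP (r : nat) (t p : R) : (0 < r)%N -> Qm r t p *m Pm r t p = 1%:M.
Proof.
move=> Hr; apply/matrixP => L L'; rewrite !mxE.
have HrR : INR r <> R0 by apply: not_0_INR => H; rewrite H in Hr.
have HL1 : (L %/ r < r)%N by rewrite ltn_divLR // ltn_ord.
have HL2 : (L %% r < r)%N by rewrite ltn_mod.
have HL3 : (L' %/ r < r)%N by rewrite ltn_divLR // ltn_ord.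
have HL4 : (L' %% r < r)%N by rewrite ltn_mod.
set c := Cr (Rinv (Rmult (INR r) (INR r))).
pose f := fun n => c * ((vc r t (L %/ r) (n %/ r) * vv r t (L' %/ r) (n %/ r))
     * (vc r p (L %% r) (n %% r) * vv r p (L' %% r) (n %% r))).
transitivity (\sum_(K < r * r) f K).
  apply: eq_bigr => K _; rewrite !mxE /Pv /f.
  rewrite -!mulrA; congr (_ * _); rewrite !mulrA; congr (_ * _); rewrite -!mulrA; congr (_ * _).
  by rewrite mulrC.
rewrite big_pair /f.
transitivity (c * ((\sum_(a < r) (vc r t (L %/ r) a * vv r t (L' %/ r) a)) *
                   (\sum_(b < r) (vc r p (L %% r) b * vv r p (L' %% r) b)))).
  rewrite mulr_suml mulr_sumr; apply: eq_bigr => a _.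
  rewrite mulr_sumr mulr_sumr; apply: eq_bigr => b _.
  by rewrite divK ?modK // ?ltn_ord.
rewrite !orth1 //.
have Hdec : (L == L') = ((L %/ r)%N == (L' %/ r)%N) && ((L %% r)%N == (L' %% r)%N).
  apply/eqP/andP.
    by move=> ->.
  case=> /eqP H1 /eqP H2; apply: val_inj => /=.
  by rewrite (divn_eq L r) (divn_eq L' r) H1 H2.
rewrite Hdec; case: eqP => _; case: eqP => _ /=; rewrite ?mulr0 ?mul0r //.
  1: by rewrite /c -!Cr_mul; congr Cr; field; exact: HrR.
all: by rewrite mulr0.
Qed.

Lemma charpoly (r : nat) (t p x : R) : (1 < r)%N ->
  \det ((Cr x)%:M - DeltaG r t p) = \prod_(L < r * r) (Cr x - Cr (dd r t p L)).
Proof.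
move=> Hr; have H0r : (0 < r)%N by apply: ltn_trans Hr.
set A := DeltaG r t p; set P := Pm r t p; pose d : 'rV[C]_(r * r) := \row_L Cr (dd r t p L).
have e1 : ((Cr x)%:M - A) *m P = P *m ((Cr x)%:M - diag_mx d).
  by rewrite mulmxBl mulmxBr mul_scalar_mx mul_mx_scalar DeltaG_P.
have e2 : \det (Qm r t p) * \det P = 1 by rewrite -det_mulmx QP // det1.
have e3 : (Cr x)%:M - diag_mx d = diag_mx (\row_L (Cr x - Cr (dd r t p L))).
  apply/matrixP => i j; rewrite !mxE; case: eqP => _; by rewrite ?mulr1n ?mulr0n ?subrr.
have := congr1 determinant e1; rewrite !det_mulmx e3 det_diag => H.
rewrite -[LHS]mulr1 -e2 mulrCA H mulrA e2 mul1r.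
by apply: eq_bigr => i _; rewrite mxE.
Qed.

End P6.
Import P6.

Module P7.
Import GRing.Theory.
Local Open Scope R_scope.

Definition Rprod (s : seq R) (x : R) : R := foldr (fun y acc => Rmult (Rminus x y) acc) R1 s.

Lemma Rprod_cont (s : seq R) (x : R) : continuity_pt (Rprod s) x.
Proof.
elim: s => [|y s IH] /=.
  by apply: continuity_pt_const => a b.
have H1 : continuity_pt (fun z => Rminus z y) x.
  apply: (continuity_pt_minus id (fct_cte y)).
    exact: derivable_continuous_pt (derivable_pt_id x).
  by apply: continuity_pt_const => a b.
exact: (continuity_pt_mult (fun z => Rminus z y) (Rprod s) x H1 IH).
Qed.

Lemma agree_at (f g : R -> R) (y : R) : continuity_pt f y -> continuity_pt g y ->
  (forall x, x <> y -> f x = g x) -> f y = g y.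
Proof.
move=> Hf Hg H.
case: (Req_dec (f y) (g y)) => // Hne; exfalso.
set e := Rdiv (Rabs (Rminus (f y) (g y))) 2.
have He : (0 < e).
  rewrite /e; have := Rabs_pos_lt (Rminus (f y) (g y)); move=> h.
  have : Rminus (f y) (g y) <> R0 by move=> h'; apply: Hne; lra.
  move/h; lra.
case: (Hf e He) => a [Ha Hfa].
case: (Hg e He) => b [Hb Hgb].
set x := Rplus y (Rdiv (Rmin a b) 2).
have Hm : (0 < Rmin a b) by apply: Rmin_pos.
have Hxy : y <> x by rewrite /x; lra.
have Hd : forall c, (Rmin a b <= c) -> (R_dist x y < c).
  move=> c Hc; rewrite /R_dist /x.
  rewrite (_ : Rminus (Rplus y (Rdiv (Rmin a b) 2)) y = Rdiv (Rmin a b) 2); last by ring.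
  rewrite Rabs_right; lra.
have h1 := Hfa x (conj (conj I Hxy) (Hd a (Rmin_l a b))).
have h2 := Hgb x (conj (conj I Hxy) (Hd b (Rmin_r a b))).
rewrite /= /R_dist in h1 h2.
rewrite H in h1; last by auto.
move: h1 h2 => /Rabs_def2 [h1 h1'] /Rabs_def2 [h2 h2'].
rewrite /e in h1 h1' h2 h2'.
move: h1 h1' h2 h2'; rewrite /Rabs; case: Rcase_abs => h; lra.
Qed.

Lemma Cprod_Rprod (s : seq R) (x : R) :
  (\prod_(y <- s) (Cr x - Cr y))%R = Cr (Rprod s x).
Proof.
rewrite -(Cr_prod s (fun y => Rminus x y)).
by apply: eq_bigr => y _; rewrite Cr_sub.
Qed.

Lemma Rprod_perm (s1 s2 : seq R) : perm_eq s1 s2 -> forall x, Rprod s1 x = Rprod s2 x.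
Proof. by move=> H x; apply: Cr_inj; rewrite -!Cprod_Rprod (perm_big _ H). Qed.

Lemma Rprod_root (s : seq R) (y : R) : Rprod s y = R0 -> y \in s.
Proof.
elim: s => [|z s IH] /=; first by move=> H; exfalso; lra.
move/Rmult_integral => [H|H]; rewrite in_cons.
  by apply/orP; left; apply/eqP; lra.
by rewrite IH ?orbT.
Qed.

Lemma Rprod_perm_eq (s1 s2 : seq R) :
  (forall x, Rprod s1 x = Rprod s2 x) -> perm_eq s1 s2.
Proof.
elim: s1 s2 => [|y s1 IH] s2 H.
  case: s2 H => [|z s2] H //.
  have := H z; rewrite /= Rminus_diag Rmult_0_l => h; exfalso; lra.
have Hy : y \in s2.
  apply: Rprod_root; rewrite -H /= Rminus_diag Rmult_0_l //.
have Hp := perm_to_rem Hy.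
have Hne : forall x, x <> y -> Rprod s1 x = Rprod (rem y s2) x.
  move=> x Hx.
  have := H x; rewrite (Rprod_perm Hp) /= => h.
  apply: (Rmult_eq_reg_l (Rminus x y)) => //; lra.
have H' : forall x, Rprod s1 x = Rprod (rem y s2) x.
  move=> x; case: (Req_dec x y) => [->|]; last exact: Hne.
  exact: (agree_at (Rprod_cont _ _) (Rprod_cont _ _) Hne).
have H2 : perm_eq (y :: s1) (y :: rem y s2) by rewrite perm_cons IH.
by rewrite (perm_trans H2) // perm_sym.
Qed.

Definition spec (r : nat) (t p : R) : seq R := [seq dd r t p n | n <- iota 0 (r * r)].
Definition ssp (r : nat) (t p : R) : seq R := sort Rleb (spec r t p).

Lemma Rleb_total : total Rleb.
Proof. move=> x y; rewrite /Rleb; case: (Rle_dec x y) => h //=; case: (Rle_dec y x) => h' //=; lra. Qed.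
Lemma Rleb_trans : transitive Rleb.
Proof. move=> y x z; rewrite /Rleb; case: (Rle_dec x y) => h //=; case: (Rle_dec y z) => h' //=; case: (Rle_dec x z) => //=; lra. Qed.
Lemma Rleb_anti : antisymmetric Rleb.
Proof. move=> x y; rewrite /Rleb; case: (Rle_dec x y) => h //=; case: (Rle_dec y x) => h' //= _; lra. Qed.
Lemma RlebP x y : reflect (x <= y) (Rleb x y).
Proof. by rewrite /Rleb; case: Rle_dec => h; constructor. Qed.

Lemma is_spec (r : nat) (t p : R) : (1 < r)%N -> is_spectrum (DeltaG r t p) (ssp r t p).
Proof.
move=> Hr; split; [|split].
- by rewrite size_sort size_map size_iota.
- exact: (sort_sorted Rleb_total).
- move=> x; rewrite charpoly // (perm_big _ (permEl (perm_sort Rleb _))) big_map.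
  by rewrite -(big_mkord xpredT (fun L => (Cr x - Cr (dd r t p L))%R)) /index_iota subn0.
Qed.

Lemma spec_unique (n : nat) (A : 'M[C]_n) (s1 s2 : seq R) :
  is_spectrum A s1 -> is_spectrum A s2 -> s1 = s2.
Proof.
move=> [_ [S1 P1]] [_ [S2 P2]].
apply: (sorted_eq Rleb_trans Rleb_anti S1 S2).
apply: Rprod_perm_eq => x; apply: Cr_inj.
by rewrite -!Cprod_Rprod -P1 -P2.
Qed.

Lemma eigs_eq (r : nat) (t p : R) : (1 < r)%N -> eigs (DeltaG r t p) = ssp r t p.
Proof.
move=> Hr; apply: (spec_unique _ (is_spec t p Hr)).
rewrite /eigs; apply: epsilon_spec; exists (ssp r t p); exact: is_spec.
Qed.

Lemma lamG_eq (r : nat) (t p : R) (k : nat) : (1 < r)%N ->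
  lamG r t p k = nth R0 (ssp r t p) k.-1.
Proof. by move=> Hr; rewrite /lamG eigs_eq. Qed.

End P7.
Import P7.

Module P8.
Local Open Scope R_scope.

Definition Rltb (x y : R) : bool := if Rlt_dec x y then true else false.
Lemma RltbP x y : reflect (x < y) (Rltb x y).
Proof. by rewrite /Rltb; case: Rlt_dec => h; constructor. Qed.

Lemma sorted_count (E : R) (s : seq R) : sorted Rleb s ->
  forall i, (i < size s)%N -> (nth R0 s i < E <-> (i < count (fun y => Rltb y E) s)%N).
Proof.
elim: s => [|x s IH] //= Hs.
have Hall : all (Rleb x) s by move: Hs; rewrite (path_sortedE Rleb_trans) => /andP[].
have Hs' : sorted Rleb s by exact: path_sorted Hs.
case: (RltbP x E) => Hx /=.
  case=> [|i] Hi /=; first by split.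
  by rewrite ltnS; apply: IH.
have Hc : count (fun y => Rltb y E) s = 0%N.
  apply/eqP; rewrite -leqn0 leqNgt -has_count; apply/hasP => -[y Hy /RltbP Hy'].
  move/allP: Hall => /(_ y Hy) /RlebP; lra.
rewrite Hc => i Hi; split => // H; exfalso.
case: i Hi H => [|i] Hi /= H; first lra.
have : Rleb x (nth R0 s i) by move/allP: Hall; apply; apply: mem_nth.
move/RlebP; lra.
Qed.

Lemma count_sum (T : Type) (a : pred T) (s : seq T) :
  count a s = (\sum_(x <- s) (a x : nat))%N.
Proof. by elim: s => [|x s IH]; rewrite ?big_nil ?big_cons //= IH. Qed.

Lemma count_spec (r : nat) (t p E : R) :
  count (fun y => Rltb y E) (ssp r t p) =
  (\sum_(n < r * r) (Rltb (dd r t p n) E : nat))%N.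
Proof.
rewrite /ssp (permP (permEl (perm_sort Rleb _))) /spec count_sum big_map.
by rewrite -(big_mkord xpredT (fun n => (Rltb (dd r t p n) E : nat))) /index_iota subn0.
Qed.

Lemma count_from_max (s : seq R) (E : R) (l : nat) : sorted Rleb s ->
  (l <= size s)%N -> (l = 0%N \/ nth R0 s l.-1 < E) ->
  (forall k, (l < k)%N -> (k <= size s)%N -> ~ nth R0 s k.-1 < E) ->
  count (fun y => Rltb y E) s = l.
Proof.
move=> Hs Hl Hlow Hmax.
have Hcs : (count (fun y => Rltb y E) s <= size s)%N by apply: count_size.
apply/eqP; rewrite eqn_leq; apply/andP; split.
  case: (ltnP l (size s)) => H.
    rewrite leqNgt; apply/negP => Hc.
    apply: (Hmax l.+1) => //; exact: (proj2 (sorted_count E Hs H) Hc).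
  by apply: leq_trans Hcs H.
case: Hlow => [->|H] //.
case: l Hl Hmax H => [|l] Hl Hmax H //.
exact: (proj1 (sorted_count E Hs Hl) H).
Qed.

Lemma nth_from_count (s : seq R) (E : R) (c : nat) : sorted Rleb s ->
  count (fun y => Rltb y E) s = c -> E \notin s -> (c < size s)%N ->
  (c = 0%N \/ nth R0 s c.-1 < E) /\ E < nth R0 s c.
Proof.
move=> Hs Hc HE Hcs; split.
  case: c Hc Hcs => [|c] Hc Hcs; [by left | right].
  have Hc1 : (c < size s)%N by exact: ltnW.
  by apply: (proj2 (sorted_count E Hs Hc1)); rewrite Hc.
have H1 : ~ nth R0 s c < E by move/(sorted_count E Hs Hcs); rewrite Hc ltnn.
have H2 : nth R0 s c <> E by move=> H; move: HE; rewrite -H mem_nth.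
lra.
Qed.

End P8.
Import P8.

Module P9.
Local Open Scope R_scope.

Lemma PI_gt2 : 2 < PI.
Proof. have := PI2_1; lra. Qed.

Lemma sin_small (u : R) : 0 <= u -> u <= 1 -> u / 2 <= sin u <= u.
Proof.
move=> H0 H1.
have := sin_bound u 0 H0 ltac:(have := PI_gt2; lra).
rewrite /sin_approx /= /Rdiv.
move=> [hl hu]; split.
- move: hl; rewrite /sin_term /= => hl.
  have e : u - u * u * u / 6 <= sin u.
    apply: Rle_trans hl; right; field.
  have : u * u <= 1 by nra.
  nra.
- case: (Req_dec u 0) => [->|hu0]; first by rewrite sin_0; lra.
  by apply: Rlt_le; apply: sin_lt_x; lra.
Qed.

Lemma Rdiv_le_0_compat (a b : R) : 0 <= a -> 0 < b -> 0 <= a / b.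
Proof. move=> h1 h2; apply: Rmult_le_pos => //; left; exact: Rinv_0_lt_compat. Qed.

Definition gd (r : nat) (A sg u : R) : R := 2 * cos (A + sg * u / INR r) - 2 * cos A.

Lemma gd_form (r : nat) (A sg u : R) : INR r <> 0 ->
  gd r A sg u = -4 * sin (sg * u / (2 * INR r)) * sin (A + sg * u / (2 * INR r)).
Proof.
move=> Hr; rewrite /gd.
have -> : 2 * cos (A + sg * u / INR r) - 2 * cos A = 2 * (cos (A + sg * u / INR r) - cos A) by ring.
rewrite form2.
have -> : (A + sg * u / INR r - A) / 2 = sg * u / (2 * INR r) by field.
have -> : (A + sg * u / INR r + A) / 2 = A + sg * u / (2 * INR r) by field.
ring.
Qed.

Lemma sin_sg (sg x : R) : sg = 1 \/ sg = -1 -> sin (sg * x) = sg * sin x.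
Proof.
case=> ->.
  have -> : 1 * x = x by ring. ring.
have -> : -1 * x = - x by ring.
rewrite sin_neg; ring.
Qed.

Lemma Rabs_le_split (x b : R) : -b <= x -> x <= b -> Rabs x <= b.
Proof. move=> h1 h2; rewrite /Rabs; case: Rcase_abs => _; lra. Qed.

Lemma gd_upper (r : nat) (A sg u : R) : 2 <= INR r -> sg = 1 \/ sg = -1 ->
  0 <= u -> u <= 1 -> Rabs (gd r A sg u) <= u.
Proof.
move=> Hr Hsg H0 H1.
rewrite gd_form; last lra.
have -> : sg * u / (2 * INR r) = sg * (u / (2 * INR r)) by field; lra.
rewrite (@sin_sg sg (u / (2 * INR r)) Hsg).
have Hw0 : 0 <= u / (2 * INR r) by apply: Rdiv_le_0_compat; lra.
have Hw1 : u / (2 * INR r) <= u / 4.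
  apply: Rmult_le_compat_l => //; apply: Rinv_le_contravar; lra.
have [s1 s2] := sin_small Hw0 ltac:(lra).
have := SIN_bound (A + sg * (u / (2 * INR r))).
case: Hsg => -> hb; apply: Rabs_le_split; nra.
Qed.

Lemma gd_zero (r : nat) (A sg u : R) : 2 <= INR r -> sg = 1 \/ sg = -1 ->
  sin A = 0 -> 0 <= u -> u <= 1 -> Rabs (gd r A sg u) <= u * u.
Proof.
move=> Hr Hsg HA H0 H1.
rewrite gd_form; last lra.
have -> : sg * u / (2 * INR r) = sg * (u / (2 * INR r)) by field; lra.
rewrite sin_plus HA Rmult_0_l Rplus_0_l (@sin_sg sg (u / (2 * INR r)) Hsg).
have Hw0 : 0 <= u / (2 * INR r) by apply: Rdiv_le_0_compat; lra.
have Hw1 : u / (2 * INR r) <= u / 4.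
  apply: Rmult_le_compat_l => //; apply: Rinv_le_contravar; lra.
have [s1 s2] := sin_small Hw0 ltac:(lra).
have hc : cos A * cos A = 1 by have := sin2_cos2 A; rewrite /Rsqr HA; lra.
have hc' : -1 <= cos A <= 1 by apply: COS_bound.
set s := sin (u / (2 * INR r)) in s1 s2 *.
have hs : 0 <= s <= u / 4 by lra.
have hs2 : s * s <= u * u / 16 by nra.
have hp : - (s * s) <= cos A * (s * s) <= s * s by nra.
case: Hsg => -> ; apply: Rabs_le_split; nra.
Qed.

Lemma sin_lip (A w : R) : 0 <= w -> w <= 1 -> Rabs (sin (A + w) - sin A) <= w.
Proof.
move=> H0 H1; rewrite form4.
have -> : (A + w - A) / 2 = w / 2 by field.
have [s1 s2] := sin_small (ltac:(lra) : 0 <= w / 2) ltac:(lra).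
have := COS_bound ((A + w + A) / 2) => hb.
apply: Rabs_le_split; nra.
Qed.

Lemma sin_lip' (A w : R) : 0 <= w -> w <= 1 -> Rabs (sin (A - w) - sin A) <= w.
Proof.
move=> H0 H1.
have := sin_lip (A - w) H0 H1.
rewrite (_ : A - w + w = A); last ring.
by rewrite Rabs_minus_sym.
Qed.

Lemma gd_sign (r : nat) (A sg u : R) : 2 <= INR r -> sg = 1 \/ sg = -1 ->
  0 < u -> u <= 1 -> u <= INR r * Rabs (sin A) ->
  (0 < sg * sin A -> gd r A sg u <= - (u * Rabs (sin A) / (2 * INR r))) /\
  (sg * sin A < 0 -> u * Rabs (sin A) / (2 * INR r) <= gd r A sg u).
Proof.
move=> Hr Hsg H0 H1 H2.
rewrite gd_form; last lra.
set w := u / (2 * INR r).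
have -> : sg * u / (2 * INR r) = sg * w by rewrite /w; field; lra.
rewrite (@sin_sg sg w Hsg).
have Hw0 : 0 < w by apply: Rdiv_lt_0_compat; lra.
have Hw1 : w <= 1 / 4.
  rewrite /w /Rdiv Rmult_1_l; apply: Rle_trans (_ : u * / 4 <= _).
    apply: Rmult_le_compat_l; [lra|apply: Rinv_le_contravar; lra].
  lra.
have Hw2 : w <= Rabs (sin A) / 2.
  rewrite /w; apply: (Rmult_le_reg_r (2 * INR r)); first lra.
  rewrite /Rdiv Rmult_assoc Rinv_l; last lra.
  nra.
have [s1 s2] := sin_small (Rlt_le _ _ Hw0) ltac:(lra).
have hw : w * Rabs (sin A) = u * Rabs (sin A) / (2 * INR r) by rewrite /w; field; lra.
rewrite -hw.
have Hw3 : w <= 1 by lra.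
have hl1 := sin_lip A (Rlt_le _ _ Hw0) Hw3.
have hl2 := sin_lip' A (Rlt_le _ _ Hw0) Hw3.
have Hb1 := Rabs_def2 _ _ (Rle_lt_trans _ _ _ hl1 (Rlt_plus_1 w)).
have : - w <= sin (A + w) - sin A <= w.
  move: hl1; rewrite /Rabs; case: Rcase_abs => h; lra.
have : - w <= sin (A - w) - sin A <= w.
  move: hl2; rewrite /Rabs; case: Rcase_abs => h; lra.
move=> hb2 hb1 {Hb1 hl1 hl2}.
have Hsw : 0 <= w / 2 <= sin w by lra.
case: Hsg => Hsg; rewrite Hsg; split => h3.
- rewrite Rabs_right in Hw2 *; try lra.
  have := Rmult_le_compat (w / 2) (sin w) (sin A / 2) (sin (A + 1 * w)) ltac:(lra) ltac:(lra) ltac:(lra)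
    ltac:(rewrite Rmult_1_l; lra).
  nra.
- rewrite Rabs_left in Hw2 *; try lra.
  have := Rmult_le_compat (w / 2) (sin w) (- sin A / 2) (- sin (A + 1 * w)) ltac:(lra) ltac:(lra) ltac:(lra)
    ltac:(rewrite Rmult_1_l; lra).
  nra.
- rewrite Rabs_left in Hw2 *; try lra.
  have := Rmult_le_compat (w / 2) (sin w) (- sin A / 2) (- sin (A + -1 * w)) ltac:(lra) ltac:(lra) ltac:(lra)
    ltac:(rewrite (_ : A + -1 * w = A - w); [lra|ring]).
  nra.
- rewrite Rabs_right in Hw2 *; try lra.
  have := Rmult_le_compat (w / 2) (sin w) (sin A / 2) (sin (A + -1 * w)) ltac:(lra) ltac:(lra) ltac:(lra)
    ltac:(rewrite (_ : A + -1 * w = A - w); [lra|ring]).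
  nra.
Qed.

End P9.
Import P9.

Module P10.
Local Open Scope R_scope.

Definition Dn (A B sg : R) : Prop :=
  (sin B <> 0 /\ 0 < sg * sin B) \/ (sin B = 0 /\ 0 < sg * sin A).

Lemma cos_pm1 (x : R) : sin x = 0 -> cos x = 1 \/ cos x = -1.
Proof.
move=> H; have := sin2_cos2 x; rewrite /Rsqr H => h.
have : (cos x - 1) * (cos x + 1) = 0 by nra.
case/Rmult_integral => h'; [left|right]; lra.
Qed.

Lemma min_pos (a b : R) : 0 < a -> 0 < b -> 0 < Rmin a b.
Proof. move=> ha hb; exact: Rmin_pos. Qed.

Lemma pow_facts (h : R) : 0 < h -> h <= 1 ->
  0 < h * h /\ h * h <= h /\ 0 < h * h * h /\ h * h * h <= h * h.
Proof.
move=> h0 h1.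
have a : 0 < h * h by apply: Rmult_lt_0_compat.
have b : h * h <= h by have := Rmult_le_compat_l h h 1 (Rlt_le _ _ h0) h1; rewrite Rmult_1_r.
have c : 0 < h * h * h by apply: Rmult_lt_0_compat.
have d : h * h * h <= h * h by have := Rmult_le_compat_l (h * h) h 1 (Rlt_le _ _ a) h1; rewrite Rmult_1_r.
by [].
Qed.

Lemma kappa_le (r : nat) (a : R) : 0 <= a -> 2 <= INR r -> a / (2 * INR r) <= INR r * a.
Proof.
move=> ha hr.
have : a / (2 * INR r) <= a / 4.
  apply: Rmult_le_compat_l => //; apply: Rinv_le_contravar; lra.
nra.
Qed.

Lemma pair_ev (r : nat) (A B sg E : R) : 2 <= INR r -> (sg = 1 \/ sg = -1) ->
  E <> 4 -> E <> 0 -> E <> -4 ->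
  exists d, 0 < d /\ forall h, 0 < h < d ->
   let F0 := 2 * cos A + 2 * cos B in
   let F' := 2 * cos (A + sg * (h * h * h) / INR r) + 2 * cos (B + sg * (h * h) / INR r) in
   (F0 < E -> F' < E) /\ (E < F0 -> E < F') /\
   (F0 = E -> (Dn A B sg -> F' < E) /\ (~ Dn A B sg -> E < F')).
Proof.
move=> Hr Hsg HE4 HE0 HEm4.
have key : forall h, 2 * cos (A + sg * (h * h * h) / INR r) + 2 * cos (B + sg * (h * h) / INR r)
   = 2 * cos A + 2 * cos B + gd r A sg (h * h * h) + gd r B sg (h * h).
  by move=> h; rewrite /gd; ring.
have Hsg' : sg * sg = 1 by case: Hsg => ->; ring.
case: (Req_dec (2 * cos A + 2 * cos B) E) => HF0.
- case: (Req_dec (sin B) 0) => HsB.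
  +
    have HsA : sin A <> 0.
      move=> HsA; case: (cos_pm1 HsA) => ca; case: (cos_pm1 HsB) => cb;
        rewrite ca cb in HF0; lra.
    have Hk : 0 < Rabs (sin A) / (2 * INR r) by apply: Rdiv_lt_0_compat; [exact: (Rabs_pos_lt _ HsA)|lra].
    exists (Rmin 1 (Rabs (sin A) / (2 * INR r))); split; first by apply: min_pos; lra.
    move=> h [h0 h1] F0 F'.
    have hm1 := Rmin_l 1 (Rabs (sin A) / (2 * INR r)).
    have hm2 := Rmin_r 1 (Rabs (sin A) / (2 * INR r)).
    have hh1 : h <= 1 by lra.
    have [p1 [p2 [p3 p4]]] := pow_facts h0 hh1.
    have hk : h < Rabs (sin A) / (2 * INR r) by lra.
    have Hu0 : 0 < h * h * h by lra.
    have Hu1 : h * h * h <= 1 by lra.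
    have Hu2 : h * h * h <= INR r * Rabs (sin A).
      have := kappa_le (Rabs_pos (sin A)) Hr.
      nra.
    have [g1 g2] := gd_sign Hr Hsg Hu0 Hu1 Hu2.
    have gz := gd_zero Hr Hsg HsB (ltac:(lra) : 0 <= h * h) (ltac:(lra) : h * h <= 1).
    have gzb := Rabs_def2 _ _ (Rle_lt_trans _ _ _ gz (Rlt_plus_1 _)).
    have gz' : - (h * h * (h * h)) <= gd r B sg (h * h) <= h * h * (h * h).
      by move: gz; rewrite /Rabs; case: Rcase_abs => ?; lra.
    have hq : h * h * (h * h) < h * h * h * Rabs (sin A) / (2 * INR r).
      have : h * h * h * h < h * h * h * (Rabs (sin A) / (2 * INR r)).
        by apply: Rmult_lt_compat_l.
      rewrite /Rdiv; nra.
    rewrite /F' /F0 key; split; [lra|split; [lra|]].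
    move=> _; split.
      case => -[H1 H2]; first by [].
      have := g1 H2; lra.
    move=> HD.
    have H2 : sg * sin A < 0.
      case: (Rlt_le_dec (sg * sin A) 0) => // h2.
      exfalso; apply: HD; right; split => //.
      case: h2 => // h2; exfalso; apply: HsA.
      have : sg * (sg * sin A) = 0 by rewrite -h2; ring.
      by rewrite -Rmult_assoc Hsg' Rmult_1_l.
    have := g2 H2; lra.
  +
    have Hk : 0 < Rabs (sin B) / (2 * INR r) by apply: Rdiv_lt_0_compat; [exact: (Rabs_pos_lt _ HsB)|lra].
    exists (Rmin 1 (Rabs (sin B) / (2 * INR r))); split; first by apply: min_pos; lra.
    move=> h [h0 h1] F0 F'.
    have hm1 := Rmin_l 1 (Rabs (sin B) / (2 * INR r)).
    have hm2 := Rmin_r 1 (Rabs (sin B) / (2 * INR r)).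
    have hh1 : h <= 1 by lra.
    have [p1 [p2 [p3 p4]]] := pow_facts h0 hh1.
    have hk : h < Rabs (sin B) / (2 * INR r) by lra.
    have Hu0 : 0 < h * h by lra.
    have Hu1 : h * h <= 1 by lra.
    have Hu2 : h * h <= INR r * Rabs (sin B).
      have := kappa_le (Rabs_pos (sin B)) Hr.
      nra.
    have [g1 g2] := gd_sign Hr Hsg Hu0 Hu1 Hu2.
    have gz := gd_upper A Hr Hsg (ltac:(lra) : 0 <= h * h * h) (ltac:(lra) : h * h * h <= 1).
    have gz' : - (h * h * h) <= gd r A sg (h * h * h) <= h * h * h.
      by move: gz; rewrite /Rabs; case: Rcase_abs => ?; lra.
    have hq : h * h * h < h * h * Rabs (sin B) / (2 * INR r).
      have : h * h * h < h * h * (Rabs (sin B) / (2 * INR r)).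
        by apply: Rmult_lt_compat_l.
      rewrite /Rdiv; nra.
    rewrite /F' /F0 key; split; [lra|split; [lra|]].
    move=> _; split.
      case => -[H1 H2]; last by [].
      have := g1 H2; lra.
    move=> HD.
    have H2 : sg * sin B < 0.
      case: (Rlt_le_dec (sg * sin B) 0) => // h2.
      exfalso; apply: HD; left; split => //.
      case: h2 => // h2; exfalso; apply: HsB.
      have : sg * (sg * sin B) = 0 by rewrite -h2; ring.
      by rewrite -Rmult_assoc Hsg' Rmult_1_l.
    have := g2 H2; lra.
-
  have Hd : 0 < Rabs (2 * cos A + 2 * cos B - E) / 2.
    apply: Rdiv_lt_0_compat; last lra; apply: Rabs_pos_lt; lra.
  exists (Rmin 1 (Rabs (2 * cos A + 2 * cos B - E) / 2)); split; first by apply: min_pos; lra.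
  move=> h [h0 h1] F0 F'.
  have hm1 := Rmin_l 1 (Rabs (2 * cos A + 2 * cos B - E) / 2).
  have hm2 := Rmin_r 1 (Rabs (2 * cos A + 2 * cos B - E) / 2).
  have hh1 : h <= 1 by lra.
  have [p1 [p2 [p3 p4]]] := pow_facts h0 hh1.
  have gA := gd_upper A Hr Hsg (ltac:(lra) : 0 <= h * h * h) (ltac:(lra) : h * h * h <= 1).
  have gB := gd_upper B Hr Hsg (ltac:(lra) : 0 <= h * h) (ltac:(lra) : h * h <= 1).
  have gA' : - h <= gd r A sg (h * h * h) <= h.
    by move: gA; rewrite /Rabs; case: Rcase_abs => ?; nra.
  have gB' : - h <= gd r B sg (h * h) <= h.
    by move: gB; rewrite /Rabs; case: Rcase_abs => ?; nra.
  have hd : h < Rabs (2 * cos A + 2 * cos B - E) / 2 by lra.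
  move: hd; rewrite /F' /F0 key /Rabs; case: Rcase_abs => ? hd.
    split; [lra|split; [lra|by move=> /HF0]].
  split; [lra|split; [lra|by move=> /HF0]].
Qed.

End P10.
Import P10.

Module P11.
Local Open Scope R_scope.

Section Parity.
Variables (r : nat) (c s : nat -> R) (E : R).
Hypothesis HE : E < 0.
Hypothesis Hc : forall j, -1 <= c j <= 1.
Hypothesis Hs0 : forall j, s j = 0 -> c j = 1 \/ c j = -1.

Definition vp : R := E / 2 + 1.
Definition vk (k : nat) : R := E / 2 - c k.
Definition F0 (j k : nat) : R := 2 * c j + 2 * c k.
Definition m1 : R := -1.

Definition Pn (v : R) : nat := (\sum_(j < r) ((c j == v) && Rltb R0 (s j) : nat))%N.
Definition Qn (v : R) : nat := (\sum_(j < r) ((c j == v) && Rltb (s j) R0 : nat))%N.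
Definition Zn (v : R) : nat := (\sum_(j < r) ((c j == v) && (s j == R0) : nat))%N.
Definition Nn (v : R) : nat := (\sum_(j < r) ((c j == v) : nat))%N.

Hypothesis HPQ : forall v, Pn v = Qn v.

Lemma N_split v : Nn v = (Pn v + Qn v + Zn v)%N.
Proof.
rewrite /Nn /Pn /Qn /Zn -!big_split /=; apply: eq_bigr => j _.
case: (c j == v) => //=.
case: (RltbP 0 (s j)) => h1; case: (RltbP (s j) 0) => h2; case: eqP => h3 //=; lra.
Qed.

Definition Db (j k : nat) : bool := if s k == 0 then Rltb R0 (s j) else Rltb 0 (s k).

Lemma eq2 (j k : nat) : (F0 j k == E) = (c j == vk k).
Proof. by rewrite /F0 /vk; apply/eqP/eqP => h; lra. Qed.

Definition Yk (k : nat) : nat :=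
  (\sum_(j < r) ((F0 j k == E) && Db j k : nat))%N.

Lemma P_low v : v < -1 -> Pn v = 0%N.
Proof.
move=> hv; rewrite /Pn big1 // => j _; case: eqP => // h; have := Hc j; lra.
Qed.

Lemma Z_val v : v <> -1 -> v < 1 -> Zn v = 0%N.
Proof.
move=> h1 h2; rewrite /Zn big1 // => j _; case: eqP => //= h; case: eqP => //= h'.
case: (Hs0 h') => h''; lra.
Qed.

Lemma Yk_eq k : Yk k = (2 * (Rltb R0 (s k) * Pn (vk k))
   + ((Rltb R0 (s k) && (c k == vp)) * Zn m1)
   + (((s k == R0) && (c k == m1)) * Pn vp))%N.
Proof.
have hck := Hc k.
rewrite /Yk /Db.
under eq_bigr do rewrite eq2.
case: eqP => hs0.
- have -> : Rltb R0 (s k) = false by case: RltbP => //; lra.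
  rewrite /= !mul0n add0n.
  case: (Hs0 hs0) => hc.
    rewrite (_ : (c k == m1) = false) ?mul0n; last by apply/eqP; rewrite /m1; lra.
    apply: P_low; rewrite /vk; lra.
  rewrite (_ : c k == m1) ?mul1n; last by apply/eqP.
  by rewrite /vk /vp hc (_ : E / 2 - -1 = E / 2 + 1) //; ring.
case: (RltbP R0 (s k)) => hs.
- rewrite mul1n /=.
  have -> : (\sum_(j < r) ((c j == vk k) && true : nat))%N = Nn (vk k).
    by apply: eq_bigr => j _; rewrite andbT.
  rewrite N_split -HPQ.
  case: (eqVneq (c k) vp) => hc /=.
    rewrite mul1n (_ : vk k = m1); last by rewrite /vk hc /vp /m1; ring.
    by rewrite addn0; lia.
  rewrite mul0n addn0 Z_val; [lia| |].
    by move=> h; move/eqP: hc; apply; rewrite /vk /vp in h *; lra.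
  by rewrite /vk; lra.
- rewrite /= mul0n !add0n.
  by rewrite big1 // => j _; rewrite andbF.
Qed.

Lemma parity_even :
  exists n, (\sum_(k < r) Yk k)%N = (2 * n)%N.
Proof.
under eq_bigr do rewrite Yk_eq.
rewrite !big_split /=.
have e1 : (\sum_(i < r) ((Rltb R0 (s i) && (c i == vp)) * Zn m1))%N = (Pn vp * Zn m1)%N.
  rewrite /Pn big_distrl /=; apply: eq_bigr => i _; by rewrite andbC.
have e2 : (\sum_(i < r) (((s i == R0) && (c i == m1)) * Pn vp))%N = (Pn vp * Zn m1)%N.
  rewrite mulnC /Zn big_distrl /=; apply: eq_bigr => i _; by rewrite andbC.
have e3 : (\sum_(i < r) (2 * (Rltb R0 (s i) * Pn (vk i))))%N = (2 * \sum_(i < r) (Rltb R0 (s i) * Pn (vk i)))%N.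
  by rewrite big_distrr.
rewrite e1 e2 big1_eq addn0.
set S := (\sum_(i < r) _)%N.
exists (S + Pn vp * Zn m1)%N.
lia.
Qed.

End Parity.

End P11.
Import P11.

Module P12.
Local Open Scope R_scope.

Lemma ev_all (n : nat) (P : nat -> R -> Prop) :
  (forall i, (i < n)%N -> exists d, 0 < d /\ forall h, 0 < h < d -> P i h) ->
  exists d, 0 < d /\ forall h, 0 < h < d -> forall i, (i < n)%N -> P i h.
Proof.
elim: n => [|n IH] H.
  by exists 1; split; [lra|move=> h _ i].
have [d1 [hd1 H1]] := IH (fun i hi => H i (ltnW hi)).
have [d2 [hd2 H2]] := H n (ltnSn n).
exists (Rmin d1 d2); split; first exact: Rmin_pos.
move=> h [h0 hh] i; rewrite ltnS leq_eqVlt => /orP[/eqP ->|hi].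
  apply: H2; have := Rmin_r d1 d2; lra.
apply: H1 => //; have := Rmin_l d1 d2; lra.
Qed.

Lemma PQ_invol (r : nat) (c s : nat -> R) (f : nat -> nat) :
  (forall j, (j < r)%N -> (f j < r)%N) -> (forall j, (j < r)%N -> f (f j) = j) ->
  (forall j, (j < r)%N -> c (f j) = c j /\ s (f j) = - s j) ->
  forall v, Pn r c s v = Qn r c s v.
Proof.
move=> Hf Hff Hcs v.
pose fo (j : 'I_r) : 'I_r := Ordinal (Hf j (ltn_ord j)).
have Hinj : injective fo.
  move=> a b /(congr1 val) /= e; apply: val_inj => /=.
  by rewrite -(Hff a (ltn_ord a)) -(Hff b (ltn_ord b)) e.
rewrite /Pn (reindex_inj Hinj) /Qn; apply: eq_bigr => j _ /=.
have [h1 h2] := Hcs j (ltn_ord j).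
rewrite h1 h2; congr (nat_of_bool (_ && _)).
by apply/RltbP/RltbP; lra.
Qed.

Lemma cos_2pi_minus (x : R) : cos (2 * PI - x) = cos x.
Proof. by rewrite cos_minus cos_2PI sin_2PI; ring. Qed.
Lemma sin_2pi_minus (x : R) : sin (2 * PI - x) = - sin x.
Proof. by rewrite sin_minus cos_2PI sin_2PI; ring. Qed.

Lemma sum_le_pred (N : nat) (b : nat -> bool) : (0 < N)%N -> b 0%N = false ->
  (\sum_(n < N) (b n : nat) <= N.-1)%N.
Proof.
case: N => // N _ hb.
rewrite big_ord_recl /= hb add0n.
apply: leq_trans (_ : \sum_(i < N) 1 <= N)%N.
  by apply: leq_sum => i _; case: (b _).
by rewrite sum_nat_const card_ord muln1.
Qed.

End P12.
Import P12.

Module P13.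
Local Open Scope R_scope.

Lemma alpha_shift (r : nat) (t0 x : R) (j : nat) : (0 < r)%N ->
  alpha r (t0 + x) j = alpha r t0 j + x / INR r.
Proof.
move=> Hr; have HrR : INR r <> 0 by apply: not_0_INR => H; rewrite H in Hr.
rewrite /alpha; field; exact: HrR.
Qed.

Lemma Dn_Db (A B sg : R) (s : nat -> R) (j k : nat) : sg = 1 \/ sg = -1 ->
  s j = sg * sin A -> s k = sg * sin B ->
  (Dn A B sg <-> Db s j k).
Proof.
move=> Hsg hj hk; rewrite /Dn /Db hj hk.
have Hz : (sg * sin B == R0) = (sin B == R0).
  by apply/eqP/eqP => h; case: Hsg => e; rewrite e in h *; lra.
rewrite Hz; case: eqP => h.
  split; first by case => -[h1 h2] //; apply/RltbP.
  by move/RltbP => h'; right.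
split; first by case => -[h1 h2] //; apply/RltbP.
by move/RltbP => h'; left.
Qed.

Lemma dd_pair (r : nat) (t p : R) (a b : nat) : (b < r)%N ->
  dd r t p (a * r + b)%N = 2 * cos (alpha r t a) + 2 * cos (alpha r p b).
Proof. by move=> hb; rewrite /dd divK // modK. Qed.

Lemma mem_ssp (r : nat) (t p y : R) : y \in ssp r t p -> exists n, (n < r * r)%N /\ y = dd r t p n.
Proof.
rewrite /ssp mem_sort /spec => /mapP [n]; rewrite mem_iota add0n => /andP[_ hn] ->.
by exists n.
Qed.

Definition PairP (r : nat) (A B sg E h : R) : Prop :=
   let F0 := 2 * cos A + 2 * cos B in
   let F' := 2 * cos (A + sg * (h * h * h) / INR r) + 2 * cos (B + sg * (h * h) / INR r) in
   (F0 < E -> F' < E) /\ (E < F0 -> E < F') /\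
   (F0 = E -> (Dn A B sg -> F' < E) /\ (~ Dn A B sg -> E < F')).

Lemma case_point (r : nat) (t0 sg E : R) (base : nat) (f : nat -> nat) :
  (1 < r)%N -> sg = 1 \/ sg = -1 -> E < 0 -> E <> 4 -> E <> 0 -> E <> -4 ->
  (forall j, (j < r)%N -> (f j < r)%N) -> (forall j, (j < r)%N -> f (f j) = j) ->
  (forall j, (j < r)%N -> cos (alpha r t0 (f j)) = cos (alpha r t0 j) /\
                         sin (alpha r t0 (f j)) = - sin (alpha r t0 j)) ->
  E < 2 * cos (alpha r t0 0) + 2 * cos (alpha r t0 0) ->
  count (fun y => Rltb y E) (ssp r t0 t0) = base ->
  exists h, 0 < h < 1 /\ exists n,
    (base + 2 * n + 1 <= r * r)%N /\
    ((base + 2 * n)%N = 0%N \/ lamG r (t0 + sg * (h * h * h)) (t0 + sg * (h * h)) (base + 2 * n) < E) /\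
    E < lamG r (t0 + sg * (h * h * h)) (t0 + sg * (h * h)) (base + 2 * n + 1).
Proof.
move=> Hr Hsg HE HE4 HE0 HEm4 Hf Hff Hfa H00 Hbase.
have H0r : (0 < r)%N by apply: ltn_trans Hr.
have Hr2 : 2 <= INR r by have := le_INR 2 r (ltP Hr).
pose A n := alpha r t0 (n %/ r)%N; pose B n := alpha r t0 (n %% r)%N.
have Hall : forall n, (n < r * r)%N ->
    exists d, 0 < d /\ forall h, 0 < h < d -> PairP r (A n) (B n) sg E h.
  by move=> n _; exact: (pair_ev (A n) (B n) Hr2 Hsg HE4 HE0 HEm4).
have [d [hd Hd]] := ev_all Hall.
set h := Rmin d 1 / 2.
have hh : 0 < h < d /\ h < 1.
  have := Rmin_l d 1; have := Rmin_r d 1; have : 0 < Rmin d 1 by apply: Rmin_pos; lra.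
  rewrite /h; lra.
exists h; split; first lra.
case: hh => hh hh1.
set t := t0 + sg * (h * h * h); set p := t0 + sg * (h * h).
have HF' : forall n, dd r t p n = 2 * cos (A n + sg * (h * h * h) / INR r) + 2 * cos (B n + sg * (h * h) / INR r).
  by move=> n; rewrite /dd /mu /t /p !alpha_shift.
have HF0 : forall n, dd r t0 t0 n = 2 * cos (A n) + 2 * cos (B n) by [].
pose c j := cos (alpha r t0 j); pose s j := sg * sin (alpha r t0 j).
have Hpt : forall n, (n < r * r)%N ->
   (Rltb (dd r t p n) E : nat) = (Rltb (dd r t0 t0 n) E + ((dd r t0 t0 n == E) && Db s (n %/ r) (n %% r)))%N
   /\ dd r t p n <> E.
  move=> n hn.
  have := Hd h hh n hn; rewrite /PairP HF' HF0 => -[h1 [h2 h3]].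
  have HD := @Dn_Db (A n) (B n) sg s (n %/ r)%N (n %% r)%N Hsg erefl erefl.
  case: (Rtotal_order (2 * cos (A n) + 2 * cos (B n)) E) => [hlt|[heq|hgt]].
  - have := h1 hlt => h1'.
    rewrite (_ : (_ == E) = false); last by apply/eqP; lra.
    split; last lra.
    by rewrite (introT (RltbP _ _) h1') (introT (RltbP _ _) hlt).
  - have [h3a h3b] := h3 heq.
    rewrite heq eqxx /=.
    rewrite (_ : Rltb E E = false); last by apply/RltbP; lra.
    case: (boolP (Db s (n %/ r) (n %% r))) => hdb.
      have := h3a (proj2 HD hdb) => hx; split; last lra.
      by rewrite (introT (RltbP _ _) hx).
    have hx : E < 2 * cos (A n + sg * (h * h * h) / INR r) + 2 * cos (B n + sg * (h * h) / INR r).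
      by apply: h3b => /(proj1 HD); apply/negP.
    split; last lra.
    by rewrite (_ : Rltb _ E = false) //; apply/RltbP; lra.
  - have := h2 hgt => h2'.
    rewrite (_ : (_ == E) = false); last by apply/eqP; lra.
    split; last lra.
    rewrite (_ : Rltb _ E = false); last by apply/RltbP; lra.
    by rewrite (_ : Rltb _ E = false) //; apply/RltbP; lra.
pose X := (\sum_(n < r * r) ((dd r t0 t0 n == E) && Db s (n %/ r)%N (n %% r)%N : nat))%N.
have Hcount : count (fun y => Rltb y E) (ssp r t p) = (base + X)%N.
  rewrite count_spec -Hbase count_spec /X -big_split /=.
  by apply: eq_bigr => n _; rewrite (proj1 (Hpt n (ltn_ord n))).
have Hc : forall j, -1 <= c j <= 1 by move=> j; apply: COS_bound.
have Hs0 : forall j, s j = 0 -> c j = 1 \/ c j = -1.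
  move=> j hj; apply: cos_pm1.
  by case: Hsg => e; rewrite /s e in hj; lra.
have HPQ : forall v, Pn r c s v = Qn r c s v.
  apply: (PQ_invol Hf Hff) => j hj.
  by have [e1 e2] := Hfa j hj; rewrite /c /s e1 e2; split; ring.
have [k Hk] := parity_even HE Hc Hs0 HPQ.
have HXk : X = (2 * k)%N.
  rewrite -Hk /X.
  rewrite (big_pair _ _ (fun n => ((dd r t0 t0 n == E) && Db s (n %/ r)%N (n %% r)%N : nat))).
  rewrite exchange_big /=; apply: eq_bigr => b _; apply: eq_bigr => a _.
  by rewrite divK // modK // dd_pair.
have Hsort : sorted Rleb (ssp r t p) by exact: (sort_sorted Rleb_total).
have Hsize : size (ssp r t p) = (r * r)%N by rewrite size_sort size_map size_iota.
have HnE : E \notin ssp r t p.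
  apply/negP => /mem_ssp [n [hn e]].
  by have := proj2 (Hpt n hn); rewrite -e.
have Hlt : (base + 2 * k < r * r)%N.
  rewrite -HXk -Hcount count_spec.
  have Hrr : (0 < r * r)%N by rewrite muln_gt0 H0r.
  apply: leq_ltn_trans (sum_le_pred (b := fun n => Rltb (dd r t p n) E) Hrr _) _.
    apply/RltbP.
    have := Hd h hh 0%N Hrr; rewrite /PairP HF' => -[_ [h2 _]].
    have : E < 2 * cos (A 0%N) + 2 * cos (B 0%N) by rewrite /A /B div0n mod0n.
    move/h2; lra.
  by rewrite prednK.
exists k; split; first by rewrite addn1.
have Hcs : (base + 2 * k < size (ssp r t p))%N by rewrite Hsize.
have Hcnt : count (fun y => Rltb y E) (ssp r t p) = (base + 2 * k)%N by rewrite Hcount HXk.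
have := nth_from_count Hsort Hcnt HnE Hcs.
rewrite /lamG (eigs_eq _ _ Hr) -/t -/p addn1 /=.
by [].
Qed.

End P13.
Import P13.

Module P14.
Local Open Scope R_scope.

Lemma base_count (r : nat) (t E : R) (l : nat) : (1 < r)%N ->
  (l <= r * r)%N -> (l = 0%N \/ lamG r t t l < E) ->
  (forall k : nat, (l < k)%N -> (k <= r * r)%N -> ~ lamG r t t k < E) ->
  count (fun y => Rltb y E) (ssp r t t) = l.
Proof.
move=> Hr Hl Hlow Hmax.
have Hsize : size (ssp r t t) = (r * r)%N by rewrite size_sort size_map size_iota.
apply: count_from_max.
- exact: (sort_sorted Rleb_total).
- by rewrite Hsize.
- by case: Hlow => [->|h]; [left|right; rewrite -(lamG_eq _ _ _ Hr)].
- by move=> k h1 h2; rewrite -(lamG_eq _ _ _ Hr); apply: Hmax; rewrite // -Hsize.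
Qed.

Lemma invol0 (r : nat) : (0 < r)%N ->
  forall j, (j < r)%N -> cos (alpha r 0 ((r - j) %% r)%N) = cos (alpha r 0 j) /\
                         sin (alpha r 0 ((r - j) %% r)%N) = - sin (alpha r 0 j).
Proof.
move=> Hr j hj.
have HrR : INR r <> 0 by apply: not_0_INR => H; rewrite H in Hr.
case: j hj => [|j] hj.
  have e : alpha r 0 0 = 0 by rewrite /alpha /=; field; exact: HrR.
  rewrite subn0 modnn e sin_0; split; [done|ring].
rewrite modn_small; last by rewrite ltn_subrL.
have -> : alpha r 0 (r - j.+1)%N = 2 * PI - alpha r 0 j.+1.
  rewrite /alpha minus_INR; last by apply/leP; exact: ltnW.
  field; exact: HrR.
by rewrite cos_2pi_minus sin_2pi_minus.
Qed.

Lemma involpi (r : nat) : (0 < r)%N ->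
  forall j, (j < r)%N -> cos (alpha r PI (r - j.+1)%N) = cos (alpha r PI j) /\
                         sin (alpha r PI (r - j.+1)%N) = - sin (alpha r PI j).
Proof.
move=> Hr j hj.
have HrR : INR r <> 0 by apply: not_0_INR => H; rewrite H in Hr.
have -> : alpha r PI (r - j.+1)%N = 2 * PI - alpha r PI j.
  rewrite /alpha minus_INR; last by apply/leP.
  rewrite S_INR; field; exact: HrR.
by rewrite cos_2pi_minus sin_2pi_minus.
Qed.

Lemma ff0 (r j : nat) : (0 < r)%N -> (j < r)%N -> ((r - ((r - j) %% r)) %% r)%N = j.
Proof.
move=> Hr hj; case: j hj => [|j] hj; first by rewrite subn0 modnn subn0 modnn.
rewrite (modn_small (m := (r - j.+1)%N)); last by rewrite ltn_subrL.
by rewrite subKn ?modn_small // ltnW.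
Qed.

Lemma ffpi (r j : nat) : (j < r)%N -> (r - (r - j.+1).+1)%N = j.
Proof. move=> hj; lia. Qed.


End P14.
Import P14.

Local Open Scope R_scope.
Theorem mainTheorem8 (r : nat) (E : R) (l m : nat)
  (Hr : (0 < r)%N) (Hev : ~~ odd r)
  (HEC : exists j1 j2 : nat, (j1 <= r)%N /\ (j2 <= r)%N /\
           E = 2 * cos (PI * INR j1 / INR r) + 2 * cos (PI * INR j2 / INR r))
  (HEm4 : E <> -4) (HE0 : E <> 0) (HE4 : E <> 4) (HEneg : E < 0)
  (Hl1 : (1 <= l)%N) (Hlr : (l <= r * r)%N) (Hl : lamG r 0 0 l < E)
  (Hlmax : forall k : nat, (l < k)%N -> (k <= r * r)%N -> ~ lamG r 0 0 k < E)
  (Hmr : (m <= r * r)%N) (Hm : m = 0%N \/ lamG r PI PI m < E)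
  (Hmmax : forall k : nat, (m < k)%N -> (k <= r * r)%N -> ~ lamG r PI PI k < E) :
  exists (t1 p1 t2 p2 : R) (n1 n2 : nat),
    0 <= t1 <= PI /\ 0 <= p1 <= PI /\ 0 <= t2 <= PI /\ 0 <= p2 <= PI /\
    (l + 2 * n1 + 1 <= r * r)%N /\
    lamG r t1 p1 (l + 2 * n1) < E /\ E < lamG r t1 p1 (l + 2 * n1 + 1) /\
    (m + 2 * n2 + 1 <= r * r)%N /\
    ((m + 2 * n2)%N = 0%N \/ lamG r t2 p2 (m + 2 * n2) < E) /\
    E < lamG r t2 p2 (m + 2 * n2 + 1).
Proof.
have Hr2 : (1 < r)%N.
  case: r Hr Hev {HEC Hlr Hl Hlmax Hmr Hm Hmmax} => [|[|r]] //.
have HPI := PI_gt2.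
have Hb0 := base_count Hr2 Hlr (or_intror Hl) Hlmax.
have H00 : E < 2 * cos (alpha r 0 0) + 2 * cos (alpha r 0 0).
  have e : alpha r 0 0 = 0 by rewrite /alpha /=; field; apply: not_0_INR => h; rewrite h in Hr.
  rewrite e cos_0; lra.
have [h1 [hh1 [n1 [A1 [B1 C1]]]]] :=
  @case_point r 0 1 E l (fun j => (r - j) %% r)%N Hr2 (or_introl erefl) HEneg HE4 HE0 HEm4
    (fun j _ => ltn_pmod _ Hr)
    (fun j hj => ff0 Hr hj) (invol0 Hr) H00 Hb0.
have Hbp := base_count Hr2 Hmr Hm Hmmax.
have Hpi0 : E < 2 * cos (alpha r PI 0) + 2 * cos (alpha r PI 0).
  have HrR : 2 <= INR r by have := le_INR 2 r (ltP Hr2).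
  have e : alpha r PI 0 = PI / INR r by rewrite /alpha /=; field; lra.
  have h0 : 0 <= PI / INR r by apply: Rdiv_le_0_compat; lra.
  have h1' : PI / INR r <= PI / 2.
    apply: Rmult_le_compat_l; [lra|apply: Rinv_le_contravar; lra].
  have := cos_ge_0 (PI / INR r) ltac:(lra) h1'.
  rewrite e; lra.
have [h2 [hh2 [n2 [A2 [B2 C2]]]]] :=
  @case_point r PI (-1) E m (fun j => r - j.+1)%N Hr2 (or_intror erefl) HEneg HE4 HE0 HEm4
    (fun j _ => ltac:(by rewrite ltn_subrL Hr))
    (fun j hj => ffpi hj) (involpi Hr) Hpi0 Hbp.
have [p1 [p2 [p3 p4]]] := pow_facts (proj1 hh1) (Rlt_le _ _ (proj2 hh1)).
have [q1 [q2 [q3 q4]]] := pow_facts (proj1 hh2) (Rlt_le _ _ (proj2 hh2)).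
exists (0 + 1 * (h1 * h1 * h1)), (0 + 1 * (h1 * h1)),
       (PI + -1 * (h2 * h2 * h2)), (PI + -1 * (h2 * h2)), n1, n2.
split; first lra.
split; first lra.
split; first lra.
split; first lra.
split; first exact: A1.
split.
  case: B1 => // H; exfalso; move: H Hl1; lia.
split; first exact: C1.
split; first exact: A2.
by split.
Qed.
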